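(* Let $p$ be an odd prime with $3 \mid (p-1)$. Then there exists an MDS $(3p,\,10)_{p}$ symbol-pair code, i.e., a code $\mathcal{C}\subseteq \mathbb{F}_p^{3p}$ with minimum symbol-pair distance $d_p(\mathcal{C})=10$ and $|\mathcal{C}| = p^{3p-10+2}$.
   Context: For a vector $\mathbf{x}=(x_0,\dots,x_{n-1})\in\mathbb{F}_q^n$ (indices taken modulo $n$), the symbol-pair distance between $\mathbf{x},\mathbf{y}\in\mathbb{F}_q^n$ is $d_p(\mathbf{x},\mathbf{y})=|\{i\in\mathbb{Z}_n : (x_i,x_{i+1})\neq(y_i,y_{i+1})\}|$. The minimum symbol-pair distance of a code $\mathcal{C}\subseteq\mathbb{F}_q^n$ is $d_p(\mathcal{C})=\min\{d_p(\mathbf{x},\mathbf{y}) : \mathbf{x},\mathbf{y}\in\mathcal{C},\ \mathbf{x}\neq\mathbf{y}\}$. Any code of length $n$ over $\mathbb{F}_q$ with minimum symbol-pair distance $d_p$ (where $2\le d_p\le n$) satisfies the Singleton-type bound $|\mathcal{C}|\le q^{n-d_p+2}$; a code attaining equality is called an MDS symbol-pair code. An $(n,d_p)_q$ symbol-pair code is a code of length $n$ over $\mathbb{F}_q$ with minimum symbol-pair distance $d_p$. *)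

(* Defs.v *)
From mathcomp Require Import all_boot all_order all_algebra.
Set Implicit Arguments. Unset Strict Implicit. Unset Printing Implicit Defensive.

(* Words of length n over an alphabet F: finite functions 'I_n -> F.
   Indices are taken modulo n: the successor of i is ordS i = (i+1) mod n. *)
Definition word (F : finType) (n : nat) := {ffun 'I_n -> F}.

Definition pair_dist (F : finType) (n : nat) (x y : {ffun 'I_n -> F}) : nat :=
  #|[set i : 'I_n | (x i, x (ordS i)) != (y i, y (ordS i))]|.

Definition min_pair_dist_eq (F : finType) (n : nat)
    (C : {set {ffun 'I_n -> F}}) (d : nat) : Prop :=
  (exists x y, [/\ x \in C, y \in C, x != y & pair_dist x y = d]) /\
  (forall x y, x \in C -> y \in C -> x != y -> d <= pair_dist x y).

(* Main.v *)
Require Import Defs.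
From mathcomp Require Import all_boot all_order all_algebra.
From mathcomp Require Import zify ring.
Set Implicit Arguments. Unset Strict Implicit. Unset Printing Implicit Defensive.
Import GRing.Theory.
Section PartAr.

Lemma arith10 (a0 a1 a2 b0 b1 b2 P S n : nat) :
 b0 + b1 + b2 <= P -> S = a0 + a1 + a2 -> S <= P -> 0 < S -> (S < n -> S < P) -> 9 < n ->
 a0 <= b0 -> a1 <= b1 -> a2 <= b2 -> a1 <= b0 -> a2 <= b1 -> a0 <= b2 ->
 (a0 = 0 \/ 2 < a0) -> (a1 = 0 \/ 2 < a1) -> (a2 = 0 \/ 2 < a2) ->
 (a1 = 0 -> a2 = 0 -> a0 <= 4 -> a0 = 0) ->
 (a2 = 0 -> a0 = 0 -> a1 <= 4 -> a1 = 0) ->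
 (a0 = 0 -> a1 = 0 -> a2 <= 4 -> a2 = 0) ->
 (a2 = 0 -> a0 = 3 -> a1 = 3 -> b0 = 3 -> False) ->
 (a0 = 0 -> a1 = 3 -> a2 = 3 -> b1 = 3 -> False) ->
 (a1 = 0 -> a2 = 3 -> a0 = 3 -> b2 = 3 -> False) -> 9 < P.
Proof.
move=> hP hS hSP hS0 hSn hn l0 l1 l2 q0 q1 q2 [e0|h0] [e1|h1] [e2|h2] g0 g1 g2 t0 t1 t2.
- by move: hS0; rewrite hS e0 e1 e2.
- have : 4 < a2 by case: (leqP a2 4) => [/(g2 e0 e1) e|//]; clear -e h2; lia.
  clear -l2 q1 hP; lia.
- have : 4 < a1 by case: (leqP a1 4) => [/(g1 e2 e0) e|//]; clear -e h1; lia.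
  clear -l1 q0 hP; lia.
- case: (eqVneq a1 3) => [f1|f1]; last by clear -hP l1 l2 q0 q1 h1 h2 f1; lia.
  case: (eqVneq a2 3) => [f2|f2]; last by clear -hP l1 l2 q0 q1 h1 h2 f2; lia.
  case: (eqVneq b1 3) => [f3|f3]; first by case: (t1 e0 f1 f2 f3).
  clear -hP l1 l2 q0 q1 h1 h2 f3; lia.
- have : 4 < a0 by case: (leqP a0 4) => [/(g0 e1 e2) e|//]; clear -e h0; lia.
  clear -l0 q2 hP; lia.
- case: (eqVneq a2 3) => [f2|f2]; last by clear -hP l0 l2 q1 q2 h0 h2 f2; lia.
  case: (eqVneq a0 3) => [f0|f0]; last by clear -hP l0 l2 q1 q2 h0 h2 f0; lia.
  case: (eqVneq b2 3) => [f3|f3]; first by case: (t2 e1 f2 f0 f3).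
  clear -hP l0 l2 q1 q2 h0 h2 f3; lia.
- case: (eqVneq a0 3) => [f0|f0]; last by clear -hP l0 l1 q0 q2 h0 h1 f0; lia.
  case: (eqVneq a1 3) => [f1|f1]; last by clear -hP l0 l1 q0 q2 h0 h1 f1; lia.
  case: (eqVneq b0 3) => [f3|f3]; first by case: (t0 e2 f0 f1 f3).
  clear -hP l0 l1 q0 q2 h0 h1 f3; lia.
- case: (ltnP S n) => [/hSn|]; clear -hS h0 h1 h2 hSP hn; lia.
Qed.
End PartAr.

Section PartA.
Local Open Scope ring_scope.

Lemma vander (F : fieldType) (I : finType) (v pos : I -> F) (T : {set I}) (m : nat) :
  (forall i, i \notin T -> v i = 0) -> {in T &, injective pos} -> (#|T| <= m)%N ->
  (forall k, (k < m)%N -> \sum_i v i * pos i ^+ k = 0) -> forall i, v i = 0.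
Proof.
move=> vT inj hT hm i0.
have [iT|] := boolP (i0 \in T); last by move/vT.
pose s := [seq pos j | j <- enum (T :\ i0)].
pose P : {poly F} := \prod_(x <- s) ('X - x%:P).
have sP : (size P <= m)%N.
  have := size_prod_XsubC s (fun x => x); rewrite /P => ->.
  by rewrite size_map -cardE; rewrite (cardsD1 i0 T) iT in hT.
have : \sum_i v i * P.[pos i] = 0.
  under eq_bigr => i _ do rewrite horner_coef mulr_sumr.
  rewrite exchange_big /= big1 // => k _.
  under eq_bigr => i _ do rewrite mulrCA.
  by rewrite -mulr_sumr hm ?mulr0 // (leq_trans (ltn_ord k)).
rewrite (bigD1 i0) //= big1 ?addr0 => [/eqP|i ni0].
  rewrite mulf_eq0 => /orP[/eqP//|hr].
  have : root P (pos i0) by [].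
  rewrite root_prod_XsubC => /mapP [j].
  rewrite mem_enum in_setD1 => /andP [nj jT] /inj -/(_ iT jT) eq.
  by rewrite eq eqxx in nj.
have [iT'|/vT ->] := boolP (i \in T); last by rewrite mul0r.
apply/eqP; rewrite mulf_eq0; apply/orP; right.
have : root P (pos i) by rewrite root_prod_XsubC; apply/mapP; exists i => //; rewrite mem_enum in_setD1 ni0 iT'.
by [].
Qed.
End PartA.

Section PartB.
Local Open Scope ring_scope.

Definition cls p (s : nat) (c : 'I_(3 * p) -> 'F_p) : 'I_(3 * p) -> 'F_p :=
  fun i => if (i %% 3 == s)%N then c i else 0.
Definition mom p (X : 'I_(3 * p) -> 'F_p) (k : nat) : 'F_p :=
  \sum_i X i * (i : nat)%:R ^+ k.
Definition Lf p (j : nat) (c : 'I_(3 * p) -> 'F_p) : 'F_p :=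
  if (j < 6)%N then mom (cls (j %/ 2) c) (j %% 2) else mom c (j - 4).
Definition code p : {set {ffun 'I_(3 * p) -> 'F_p}} :=
  [set c : {ffun 'I_(3 * p) -> 'F_p} | [forall j : 'I_8, Lf j c == 0]].

Lemma code_cond p (c : {ffun 'I_(3 * p) -> 'F_p}) : c \in code p ->
  [/\ forall s k, (s < 3)%N -> (k < 2)%N -> mom (cls s c) k = 0,
      mom c 2 = 0 & mom c 3 = 0].
Proof.
rewrite inE => /forallP H; split.
- move=> s k hs hk.
  have hj : (2 * s + k < 8)%N by lia.
  have := eqP (H (Ordinal hj)); rewrite /Lf /=; clear hj.
  by case: s hs => [|[|[|]]] // _; case: k hk => [|[|]].
- by have := eqP (H (@Ordinal 8 6 isT)).
- by have := eqP (H (@Ordinal 8 7 isT)).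
Qed.

Lemma ordS_mod3 p (i : 'I_(3 * p)) : ((ordS i : nat) %% 3 = (i %% 3 + 1) %% 3)%N.
Proof. by rewrite /= modn_dvdm ?dvdn_mulr // modnDml addn1. Qed.

Lemma ordS_cast p (pr : prime p) (i : 'I_(3 * p)) :
  ((ordS i : nat)%:R : 'F_p) = (i : nat)%:R + 1.
Proof.
rewrite /= -(Fp_nat_mod pr (i.+1 %% (3 * p))) modn_dvdm ?dvdn_mull //.
by rewrite (Fp_nat_mod pr i.+1) mulrSr.
Qed.

Lemma class_inj p (pr : prime p) (p3 : p != 3%N) (i j : 'I_(3 * p)) :
  (i %% 3 = j %% 3)%N -> ((i : nat)%:R : 'F_p) = (j : nat)%:R -> i = j.
Proof.
move=> h3 /(congr1 val); rewrite /= !val_Fp_nat // => hp.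
have co : coprime 3 p.
  rewrite prime_coprime //; apply/negP => /(@prime_nt_dvdP 3 p pr isT) h.
  by rewrite -h eqxx in p3.
have : (i == j %[mod 3 * p])%N by rewrite chinese_remainder // h3 hp !eqxx.
by rewrite !modn_small // => /eqP /val_inj.
Qed.

Lemma momD p (X Y : 'I_(3 * p) -> 'F_p) k :
  mom (fun i => X i + Y i) k = mom X k + mom Y k.
Proof. by rewrite /mom -big_split /=; apply: eq_bigr => i _; rewrite mulrDl. Qed.

Lemma momN p (X : 'I_(3 * p) -> 'F_p) k : mom (fun i => - X i) k = - mom X k.
Proof. by rewrite /mom -sumrN; apply: eq_bigr => i _; rewrite mulNr. Qed.

Lemma mom_shift p (pr : prime p) (c : 'I_(3 * p) -> 'F_p) s k : (s < 3)%N ->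
  mom (cls ((s + 1) %% 3) c) k =
  \sum_i cls s (fun i => c (ordS i)) i * ((i : nat)%:R + 1) ^+ k.
Proof.
move=> hs; rewrite /mom (reindex_inj (@ordS_inj _)) /=.
apply: eq_bigr => i _; rewrite ordS_cast // /cls ordS_mod3.
have : (i %% 3 < 3)%N by rewrite ltn_mod.
by case: s hs => [|[|[|]]] // _; case: (i %% 3)%N => [|[|[|]]].
Qed.
End PartB.

Section PartC.


Lemma mod3_cases (x : nat) : [\/ (x %% 3 = 0)%N, (x %% 3 = 1)%N | (x %% 3 = 2)%N].
Proof.
have : (x %% 3 < 3)%N by rewrite ltn_mod.
by case: (x %% 3)%N => [|[|[|]]] // _; [constructor 1|constructor 2|constructor 3].
Qed.

Lemma card_part3 n (A : {set 'I_n}) :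
  #|A| = (#|[set i in A | i %% 3 == 0]| + #|[set i in A | i %% 3 == 1]|
          + #|[set i in A | i %% 3 == 2]|)%N.
Proof.
rewrite -(cardsID [set i : 'I_n | i %% 3 == 0] A).
rewrite -(cardsID [set i : 'I_n | i %% 3 == 1] (A :\: [set i : 'I_n | i %% 3 == 0])).
rewrite addnA; congr (_ + _ + _)%N; apply: eq_card => i; rewrite !inE;
  case: (mod3_cases i) => ->; rewrite ?andbT ?andbF //=.
Qed.

Lemma cyclic_step n (A : {set 'I_n}) a b : a \in A -> b \notin A ->
  exists i, i \notin A /\ ordS i \in A.
Proof.
move=> aA bA.
have iterv : forall k, (val (iter k (@ordS n) b) = (b + k) %% n)%N.
  elim=> [|k IH] /=; first by rewrite addn0 modn_small.
  by rewrite IH -addn1 modnDml addn1 addnS.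
have : iter (a + (n - b)) (@ordS n) b \in A.
  have -> : iter (a + (n - b)) (@ordS n) b = a; last by [].
  apply: val_inj; rewrite iterv.
  have hb := ltn_ord b; have ha := ltn_ord a.
  have -> : (b + (a + (n - b)) = a + n)%N by lia.
  by rewrite modnDr modn_small.
elim: (a + (n - b))%N => [|k IH] /=; first by move=> h; rewrite h in bA.
case: (boolP (iter k (@ordS n) b \in A)) => [/IH//|h1 h2].
by exists (iter k (@ordS n) b).
Qed.
End PartC.

Section PartD.

Definition Sset p (d : 'I_(3 * p) -> 'F_p) := [set i | d i != 0%R].
Definition Sc p (d : 'I_(3 * p) -> 'F_p) s := [set i in Sset d | i %% 3 == s].
Definition Qc p (d : 'I_(3 * p) -> 'F_p) s :=
  [set i : 'I_(3 * p) | (i %% 3 == s) && (d (ordS i) != 0%R)].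
Definition Pset p (d : 'I_(3 * p) -> 'F_p) :=
  [set i : 'I_(3 * p) | (d i, d (ordS i)) != (0%R, 0%R)].

Lemma mod3_succ_inj x s : x < 3 -> s < 3 -> (x + 1) %% 3 = (s + 1) %% 3 -> x = s.
Proof. by case: x => [|[|[|]]] //; case: s => [|[|[|]]]. Qed.

Lemma card_Qc p (d : 'I_(3 * p) -> 'F_p) s : s < 3 ->
  #|Qc d s| = #|Sc d ((s + 1) %% 3)|.
Proof.
move=> hs; rewrite -(card_imset _ (@ordS_inj _)); apply: eq_card => j.
apply/imsetP/idP.
- move=> [i]; rewrite !inE => /andP [/eqP h1 h2] ->.
  by rewrite h2 ordS_mod3 h1 eqxx.
- rewrite !inE => /andP [h1 /eqP h2]; exists (ord_pred j); last by rewrite ord_predK.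
  rewrite inE ord_predK h1 andbT; apply/eqP; apply: mod3_succ_inj => //.
    by rewrite ltn_mod.
  by rewrite -ordS_mod3 ord_predK h2.
Qed.

Lemma PcP p (d : 'I_(3 * p) -> 'F_p) s :
  #|Sc d s :|: Qc d s| <= #|[set i in Pset d | i %% 3 == s]|.
Proof.
apply: subset_leq_card; apply/subsetP => i; rewrite !inE xpair_eqE negb_and.
by case/orP => /andP [] -> ->; rewrite ?orbT.
Qed.

Lemma Pset_ge p (d : 'I_(3 * p) -> 'F_p) :
  #|Sc d 0 :|: Qc d 0| + #|Sc d 1 :|: Qc d 1| + #|Sc d 2 :|: Qc d 2| <= #|Pset d|.
Proof.
rewrite (card_part3 (Pset d)).
by apply: leq_add; [apply: leq_add|]; apply: PcP.
Qed.

Lemma Sset_card p (d : 'I_(3 * p) -> 'F_p) :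
  #|Sset d| = #|Sc d 0| + #|Sc d 1| + #|Sc d 2|.
Proof. exact: card_part3. Qed.

Lemma SP_proper p (d : 'I_(3 * p) -> 'F_p) :
  0 < #|Sset d| < 3 * p -> #|Sset d| < #|Pset d|.
Proof.
move=> /andP [h0 h1]; apply: proper_card; apply/properP; split.
  by apply/subsetP => i; rewrite !inE xpair_eqE negb_and => ->.
have [a aS] : exists a, a \in Sset d.
  by case/card_gt0P: h0 => a; exists a.
have [b bS] : exists b, b \notin Sset d.
  case: (pickP [pred b | b \notin Sset d]) => [b hb|h]; first by exists b.
  have : #|Sset d| = #|'I_(3 * p)|.
    by apply: eq_card => i; move: (h i) => /= /negbFE ->.
  by rewrite card_ord => e; rewrite e ltnn in h1.
have [i [iS iS']] := cyclic_step aS bS.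
exists i => //; move: iS iS'; rewrite !inE xpair_eqE negb_and => _ ->.
by rewrite orbT.
Qed.

Lemma Sc_sub p (d : 'I_(3 * p) -> 'F_p) s : Sc d s \subset Sc d s :|: Qc d s.
Proof. exact: subsetUl. Qed.
End PartD.

Section PartE.

Lemma vcls p (pr : prime p) (p3 : p != 3) (X : 'I_(3 * p) -> 'F_p)
   (T : {set 'I_(3 * p)}) s m :
  (forall i, i \in T -> i %% 3 = s) -> (forall i, X i != 0%R -> i \in T) ->
  #|T| <= m -> (forall k, k < m -> mom X k = 0%R) -> forall i, X i = 0%R.
Proof.
move=> Tc XT hT hm; apply: (@vander _ _ X (fun i : 'I_(3 * p) => ((i : nat)%:R)%R) T m) => //.
- by move=> i iT; apply/eqP; apply: contraR iT; apply: XT.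
- move=> i j iT jT /=; apply: class_inj => //; by rewrite !Tc.
Qed.

Lemma mom_ext p (X Y : 'I_(3 * p) -> 'F_p) k : (forall i, X i = Y i) -> mom X k = mom Y k.
Proof. by move=> h; apply: eq_bigr => i _; rewrite h. Qed.

Lemma cls_zero p (d : 'I_(3 * p) -> 'F_p) s : #|Sc d s| = 0 -> forall i, cls s d i = 0%R.
Proof.
move/card0_eq => h i; move: (h i); rewrite !inE /cls.
by case: (i %% 3 == s) => //; rewrite andbT => /negbFE /eqP.
Qed.

Lemma G1 p (pr : prime p) (p3 : p != 3) (d : 'I_(3 * p) -> 'F_p) s :
  (forall k, k < 2 -> mom (cls s d) k = 0%R) -> #|Sc d s| <= 2 -> #|Sc d s| = 0.
Proof.
move=> hm hc.
have h := @vcls p pr p3 (cls s d) (Sc d s) s 2.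
have {}h : forall i, cls s d i = 0%R.
  apply: h => //.
  - by move=> i; rewrite !inE => /andP [_ /eqP].
  - move=> i; rewrite /cls !inE; case: (i %% 3 =P s) => [h|_] /=; rewrite ?eqxx ?andbT //.
apply: eq_card0 => i; rewrite !inE; apply/negP => /andP [h1 h2].
by move: (h i); rewrite /cls h2 => /eqP; rewrite (negbTE h1).
Qed.

Lemma decomp p (d : 'I_(3 * p) -> 'F_p) s i : s < 3 ->
  d i = (cls s d i + cls ((s + 1) %% 3) d i + cls ((s + 2) %% 3) d i)%R.
Proof.
rewrite /cls => hs; case: s hs => [|[|[|]]] // _ /=;
  case: (mod3_cases i) => -> /=; rewrite ?addr0 ?add0r //.
Qed.

Lemma mom_decomp p (d : 'I_(3 * p) -> 'F_p) s k : s < 3 ->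
  mom d k = (mom (cls s d) k + mom (cls ((s + 1) %% 3) d) k
             + mom (cls ((s + 2) %% 3) d) k)%R.
Proof.
move=> hs; rewrite -!momD; apply: mom_ext => i; exact: decomp.
Qed.

Lemma G2 p (pr : prime p) (p3 : p != 3) (d : 'I_(3 * p) -> 'F_p) s : s < 3 ->
  (forall k, k < 2 -> mom (cls s d) k = 0%R) -> mom d 2 = 0%R -> mom d 3 = 0%R ->
  #|Sc d ((s + 1) %% 3)| = 0 -> #|Sc d ((s + 2) %% 3)| = 0 ->
  #|Sc d s| <= 4 -> #|Sc d s| = 0.
Proof.
move=> hs hm h2 h3 e1 e2 hc.
have ed : forall k, mom d k = mom (cls s d) k.
  move=> k; rewrite (mom_decomp d k hs).
  rewrite (mom_ext k (cls_zero e1)) (mom_ext k (cls_zero e2)).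
  have z : mom (fun _ : 'I_(3 * p) => 0%R) k = 0%R.
    by rewrite /mom big1 // => i _; rewrite mul0r.
  by rewrite z addr0 addr0.
have h := @vcls p pr p3 (cls s d) (Sc d s) s 4.
have {}h : forall i, cls s d i = 0%R.
  apply: h => //.
  - by move=> i; rewrite !inE => /andP [_ /eqP].
  - move=> i; rewrite /cls !inE; case: (i %% 3 =P s) => [h|_] /=; rewrite ?eqxx ?andbT //.
  - move=> k; case: k => [|[|[|[|]]]] // _; rewrite ?(hm 0) ?(hm 1) // -ed //.
apply: eq_card0 => i; rewrite !inE; apply/negP => /andP [h1 h2'].
by move: (h i); rewrite /cls h2' => /eqP; rewrite (negbTE h1).
Qed.

Local Open Scope ring_scope.

Lemma shift_exp p (X : 'I_(3 * p) -> 'F_p) :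
 [/\ \sum_i X i * ((i : nat)%:R + 1) ^+ 0 = mom X 0,
     \sum_i X i * ((i : nat)%:R + 1) ^+ 1 = mom X 1 + mom X 0,
     \sum_i X i * ((i : nat)%:R + 1) ^+ 2 = mom X 2 + 2 * mom X 1 + mom X 0 &
     \sum_i X i * ((i : nat)%:R + 1) ^+ 3 =
        mom X 3 + 3 * mom X 2 + 3 * mom X 1 + mom X 0].
Proof.
rewrite /mom; split; rewrite ?mulr_sumr -?big_split /=; apply: eq_bigr => i _; ring.
Qed.

Lemma mom0 p k : mom (fun _ : 'I_(3 * p) => 0 : 'F_p) k = 0.
Proof. by rewrite /mom big1 // => i _; rewrite mul0r. Qed.

Lemma G3 p (pr : prime p) (p3 : p != 3%N) (h3nz : (3%:R : 'F_p) != 0)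
  (d : 'I_(3 * p) -> 'F_p) s : (s < 3)%N ->
  (forall s k, (s < 3)%N -> (k < 2)%N -> mom (cls s d) k = 0) ->
  mom d 2 = 0 -> mom d 3 = 0 ->
  #|Sc d ((s + 2) %% 3)%N| = 0%N -> #|Sc d s| = 3%N -> #|Sc d ((s + 1) %% 3)%N| = 3%N ->
  #|Sc d s :|: Qc d s| = 3%N -> False.
Proof.
move=> hs Hc h2 h3 e2 c0 c1 cU.
have hs1 : ((s + 1) %% 3 < 3)%N by rewrite ltn_mod.
have cQ : #|Qc d s| = 3%N by rewrite card_Qc.
have QT : forall i, i \in Qc d s -> i \in Sc d s.
  have := subset_cardP _ (subsetUl (Sc d s) (Qc d s)).
  rewrite c0 cU => /(_ erefl) E i iQ.
  by rewrite E inE iQ orbT.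
pose V := cls s d.
pose W := cls s (fun i => d (ordS i)).
have Vs : forall i, V i != 0 -> i \in Sc d s.
  move=> i; rewrite /V /cls !inE; case: ((i %% 3)%N =P s) => [h|_] /=; rewrite ?eqxx ?andbT //.
have Ws : forall i, W i != 0 -> i \in Sc d s.
  move=> i; rewrite /W /cls; case: ((i %% 3)%N =P s) => [h|_] /=; rewrite ?eqxx // => hd.
  by apply: QT; rewrite inE hd andbT h eqxx.
have Tc : forall i, i \in Sc d s -> (i %% 3 = s)%N.
  by move=> i; rewrite !inE => /andP [_ /eqP].
have ms := fun k => mom_shift pr d k hs.
have [e0 e1 e2' e3] := shift_exp W.
have hW0 : mom W 0 = 0 by rewrite -e0 -ms Hc.
have hW1 : mom W 1 = 0.
  by have := Hc _ 1%N hs1 isT; rewrite ms e1 hW0 addr0.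
have hV0 : mom V 0 = 0 by apply: Hc.
have hV1 : mom V 1 = 0 by apply: Hc.
have z2 : forall k, mom (cls ((s + 2) %% 3)%N d) k = 0.
  by move=> k; rewrite (mom_ext k (cls_zero e2)) mom0.
have hd2 : mom V 2 + mom W 2 = 0.
  by move: h2; rewrite (mom_decomp d 2 hs) ms e2' z2 hW1 hW0 !addr0 mulr0 addr0.
have hd3 : mom V 3 + (mom W 3 + 3 * mom W 2) = 0.
  by move: h3; rewrite (mom_decomp d 3 hs) ms e3 z2 hW1 hW0 !addr0 mulr0 addr0.
have U : forall i, V i + W i = 0.
  apply: (@vcls p pr p3 (fun i => V i + W i) (Sc d s) s 3) => //.
  - move=> i h; case: (boolP (V i == 0)) => [/eqP hv|/Vs //].
    by apply: Ws; move: h; rewrite hv add0r.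
  - by rewrite c0.
  - move=> k; rewrite momD; case: k => [|[|[|]]] // _.
    + by rewrite hV0 hW0 addr0.
    + by rewrite hV1 hW1 addr0.
have WV : forall k, mom W k = - mom V k.
  move=> k; rewrite -momN; apply: mom_ext => i.
  by apply/eqP; rewrite -addr_eq0 addrC U.
have hW2 : mom W 2 = 0.
  move: hd3; rewrite (WV 3) addrA addrN add0r => /eqP; rewrite mulf_eq0.
  by rewrite (negbTE h3nz) => /eqP.
have W0 : forall i, W i = 0.
  apply: (@vcls p pr p3 W (Sc d s) s 3) => //.
  - by rewrite c0.
  - by move=> k; case: k => [|[|[|]]] // _.
have : (0 < #|Qc d s|)%N by rewrite cQ.
case/card_gt0P => i; rewrite inE => /andP [/eqP hi hd].
by move: (W0 i); rewrite /W /cls hi eqxx => /eqP; rewrite (negbTE hd).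
Qed.
End PartE.

Section PartG.
Import GRing.Theory.

Lemma three_nz p (pr : prime p) (p7 : 7 <= p) : ((3%:R)%R : 'F_p) != 0%R.
Proof.
apply/eqP => h; have := val_Fp_nat pr 3; rewrite h /= modn_small //; lia.
Qed.

Lemma dist10 p (pr : prime p) (p7 : 7 <= p) (d : 'I_(3 * p) -> 'F_p) :
  (forall s k, s < 3 -> k < 2 -> mom (cls s d) k = 0%R) ->
  mom d 2 = 0%R -> mom d 3 = 0%R -> (exists i, d i != 0%R) ->
  10 <= #|Pset d|.
Proof.
move=> Hc h2 h3 [i0 hi0].
have p3 : p != 3 by apply/eqP => e; rewrite e in p7.
have h3nz := three_nz pr p7.
have PG := Pset_ge d.
have SC := Sset_card d.
have SP : #|Sset d| <= #|Pset d|.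
  by apply: subset_leq_card; apply/subsetP => i; rewrite !inE xpair_eqE negb_and => ->.
have S0 : 0 < #|Sset d| by apply/card_gt0P; exists i0; rewrite inE.
have SP' : #|Sset d| < 3 * p -> #|Sset d| < #|Pset d|.
  by move=> h; apply: SP_proper; rewrite S0 h.
have bA : forall s, #|Sc d s| <= #|Sc d s :|: Qc d s|.
  by move=> s; apply: subset_leq_card; apply: subsetUl.
have bQ : forall s, s < 3 -> #|Sc d ((s + 1) %% 3)| <= #|Sc d s :|: Qc d s|.
  by move=> s hs; rewrite -card_Qc //; apply: subset_leq_card; apply: subsetUr.
have bQ0 := bQ 0 isT; have bQ1 := bQ 1 isT; have bQ2 := bQ 2 isT.
have bA0 := bA 0; have bA1 := bA 1; have bA2 := bA 2.
have g1 : forall s, s < 3 -> #|Sc d s| = 0 \/ 3 <= #|Sc d s|.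
  move=> s hs; case: (leqP #|Sc d s| 2) => h; last by right.
  by left; apply: G1 => // k hk; apply: Hc.
have g10 := g1 0 isT; have g11 := g1 1 isT; have g12 := g1 2 isT.
have g2 : forall s, s < 3 -> #|Sc d ((s + 1) %% 3)| = 0 -> #|Sc d ((s + 2) %% 3)| = 0 ->
    #|Sc d s| <= 4 -> #|Sc d s| = 0.
  by move=> s hs; apply: G2 => // k hk; apply: Hc.
have g20 := g2 0 isT; have g21 := g2 1 isT; have g22 := g2 2 isT.
have g30 := @G3 p pr p3 h3nz d 0 isT Hc h2 h3.
have g31 := @G3 p pr p3 h3nz d 1 isT Hc h2 h3.
have g32 := @G3 p pr p3 h3nz d 2 isT Hc h2 h3.
clear g1 g2 bQ bA.
have hn : 9 < 3 * p by clear -p7; lia.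
change ((0+1)%%3) with 1 in *; change ((1+1)%%3) with 2 in *; change ((2+1)%%3) with 0 in *.
change ((0+2)%%3) with 2 in *; change ((1+2)%%3) with 0 in *; change ((2+2)%%3) with 1 in *.
exact: (@arith10 _ _ _ _ _ _ _ _ _ PG SC SP S0 SP' hn bA0 bA1 bA2 bQ0 bQ1 bQ2 g10 g11 g12 g20 g21 g22 g30 g31 g32).
Qed.
End PartG.

Section PartH.

Lemma Lf_ext p (X Y : 'I_(3 * p) -> 'F_p) j : (forall i, X i = Y i) -> Lf j X = Lf j Y.
Proof.
move=> h; rewrite /Lf; case: ifP => _; apply: mom_ext => // i; by rewrite /cls h.
Qed.

Lemma Lf_sub p (X Y : 'I_(3 * p) -> 'F_p) j :
  Lf j (fun i => X i - Y i)%R = (Lf j X - Lf j Y)%R.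
Proof.
have ms : forall (X Y : 'I_(3 * p) -> 'F_p) k,
    mom (fun i => X i - Y i)%R k = (mom X k - mom Y k)%R.
  by move=> X' Y' k; rewrite momD momN.
rewrite /Lf; case: ifP => _; last exact: ms.
rewrite -ms; apply: mom_ext => i; rewrite /cls; case: ifP => //; by rewrite subr0.
Qed.

Lemma Lf_cond p (c : 'I_(3 * p) -> 'F_p) : (forall j : 'I_8, Lf j c = 0%R) ->
  [/\ forall s k, s < 3 -> k < 2 -> mom (cls s c) k = 0%R,
      mom c 2 = 0%R & mom c 3 = 0%R].
Proof.
move=> H; split.
- move=> s k hs hk.
  have hj : 2 * s + k < 8 by lia.
  have := H (Ordinal hj); rewrite /Lf /=; clear hj.
  by case: s hs => [|[|[|]]] // _; case: k hk => [|[|]].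
- by have := H (@Ordinal 8 6 isT).
- by have := H (@Ordinal 8 7 isT).
Qed.

Lemma cond_Lf p (c : 'I_(3 * p) -> 'F_p) :
  (forall s k, s < 3 -> k < 2 -> mom (cls s c) k = 0%R) ->
  mom c 2 = 0%R -> mom c 3 = 0%R -> forall j : 'I_8, Lf j c = 0%R.
Proof.
move=> Hc h2 h3 [j hj]; rewrite /Lf /=.
by case: j hj => [|[|[|[|[|[|[|[|]]]]]]]] // _; rewrite ?Hc.
Qed.

Lemma in_code p (c : {ffun 'I_(3 * p) -> 'F_p}) :
  (c \in code p) = [forall j : 'I_8, Lf j c == 0%R].
Proof. by rewrite inE. Qed.

Lemma pd_eq p (x y : {ffun 'I_(3 * p) -> 'F_p}) :
  pair_dist x y = #|Pset (fun i => x i - y i)%R|.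
Proof.
apply: eq_card => i; rewrite !inE !xpair_eqE !subr_eq0 //.
Qed.

Lemma card_le_seq n (A : {set 'I_n}) (s : seq nat) :
  (forall i, i \in A -> (nat_of_ord i) \in s) -> #|A| <= size s.
Proof.
move=> h; rewrite cardE -(size_map val).
apply: uniq_leq_size; first by rewrite map_inj_uniq ?enum_uniq //; apply: val_inj.
by move=> x /mapP [i]; rewrite mem_enum => /h hi ->.
Qed.
End PartH.

Section PartI.

Definition f0 p (x : nat) : 'F_p :=
  if x == 0 then 1%R else if x == 3 then (-4)%R else if x == 6 then 6%R
  else if x == 9 then (-4)%R else if x == 12 then 1%R else 0%R.

Lemma f0_supp p x : f0 p x != 0%R -> (x %% 3 == 0) && (x <= 12).
Proof.
rewrite /f0; case: (x =P 0) => [->//|_]; case: (x =P 3) => [->//|_];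
case: (x =P 6) => [->//|_]; case: (x =P 9) => [->//|_]; case: (x =P 12) => [->//|_].
by rewrite eqxx.
Qed.

Lemma sum13 p (g : nat -> 'F_p) : 13 <= 3 * p -> (forall x, 13 <= x -> g x = 0%R) ->
  (\sum_(i < 3 * p) g i = \sum_(i < 13) g i)%R.
Proof.
move=> h hg; rewrite -(big_mkord xpredT g) (big_cat_nat (leq0n 13) h) /=.
have z : (\sum_(13 <= i < 3 * p) g i = 0)%R.
  by rewrite big_nat_cond big1 // => i /andP [/andP [hi _] _]; apply: hg.
by rewrite z addr0 big_mkord.
Qed.

Definition c0 p : {ffun 'I_(3 * p) -> 'F_p} := [ffun i : 'I_(3 * p) => f0 p i].

Lemma c0_code p (h : 13 <= 3 * p) : c0 p \in code p.
Proof.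
have cls0 : forall i, cls 0 (c0 p) i = c0 p i.
  move=> i; rewrite /cls /c0 ffunE; case: eqP => // hi.
  case: (boolP (f0 p i == 0%R)) => [/eqP //|/f0_supp]; move=> /andP [/eqP e _].
  by rewrite e in hi.
have cls12 : forall s, s = 1 \/ s = 2 -> forall i, cls s (c0 p) i = 0%R.
  move=> s hs i; rewrite /cls /c0 ffunE; case: eqP => // hi.
  case: (boolP (f0 p i == 0%R)) => [/eqP //|/f0_supp]; move=> /andP [/eqP e _].
  by rewrite e in hi; case: hs hi => ->.
have mc : forall k, mom (c0 p) k = 
   (\sum_(i < 13) f0 p i * (i : nat)%:R ^+ k)%R.
  move=> k; rewrite /mom.
  under eq_bigr => i _ do rewrite /c0 ffunE.
  rewrite (@sum13 p (fun i => f0 p i * i%:R ^+ k)%R h) //.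
  move=> x hx; have -> : f0 p x = 0%R; last by rewrite mul0r.
  case: (boolP (f0 p x == 0%R)) => [/eqP //|/f0_supp]; move=> /andP [_ e].
  by move: hx e; lia.
have m0 : forall k, k < 4 -> mom (c0 p) k = 0%R.
  move=> k hk; rewrite mc !big_ord_recr big_ord0 /= /f0 /=.
  by case: k hk => [|[|[|[|]]]] // _; ring.
rewrite in_code; apply/forallP => j; apply/eqP; apply: cond_Lf.
- move=> s k hs hk; case: s hs => [|[|[|]]] // _.
  + by rewrite (mom_ext k cls0) m0 // (leq_trans hk).
  + by rewrite (mom_ext k (cls12 1 (or_introl erefl))) mom0.
  + by rewrite (mom_ext k (cls12 2 (or_intror erefl))) mom0.
- by apply: m0.
- by apply: m0.
Qed.
End PartI.

Section PartJ.

Lemma code_diff p (x y : {ffun 'I_(3 * p) -> 'F_p}) : x \in code p -> y \in code p ->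
  forall j : 'I_8, Lf j (fun i => x i - y i)%R = 0%R.
Proof.
rewrite !in_code => /forallP hx /forallP hy j.
by rewrite Lf_sub (eqP (hx j)) (eqP (hy j)) subrr.
Qed.

Lemma dist_ge p (pr : prime p) (p7 : 7 <= p) (x y : {ffun 'I_(3 * p) -> 'F_p}) :
  x \in code p -> y \in code p -> x != y -> 10 <= pair_dist x y.
Proof.
move=> hx hy hxy; rewrite pd_eq.
have [Hc h2 h3] := Lf_cond (code_diff hx hy).
apply: dist10 => //.
case: (pickP [pred i | x i != y i]) => [i /= hi|h].
  by exists i; rewrite subr_eq0.
have exy : x = y by apply/ffunP => i; move: (h i) => /= /negbFE /eqP.
by rewrite exy eqxx in hxy.
Qed.

Lemma card_code p (pr : prime p) (p7 : 7 <= p) : #|code p| = p ^ (3 * p - 8).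
Proof.
have hn : 8 <= 3 * p by lia.
have shP : forall j : 'I_(3 * p - 8), j + 8 < 3 * p.
  by move=> j; have := ltn_ord j; lia.
pose sh := fun j => Ordinal (shP j).
pose psi : {ffun 'I_(3 * p) -> 'F_p} -> {ffun 'I_8 -> 'F_p} * {ffun 'I_(3 * p - 8) -> 'F_p}
  := fun c => ([ffun j : 'I_8 => (Lf j c : 'F_p)], [ffun j : 'I_(3 * p - 8) => (c (sh j) : 'F_p)]).
have psi_inj : injective psi.
  move=> x y [e1 e2].
  pose d := fun i => (x i - y i)%R.
  have hL : forall j : 'I_8, Lf j d = 0%R.
    move=> j; rewrite Lf_sub; have := congr1 (fun f : {ffun 'I_8 -> 'F_p} => f j) e1; rewrite !ffunE => ->.
    by rewrite subrr.
  have hS : forall i : 'I_(3 * p), 8 <= i -> d i = 0%R.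
    move=> i hi; have hj : i - 8 < 3 * p - 8 by have := ltn_ord i; lia.
    have := congr1 (fun f : {ffun 'I_(3 * p - 8) -> 'F_p} => f (Ordinal hj)) e2; rewrite !ffunE /d.
    have -> : sh (Ordinal hj) = i by apply: val_inj => /=; lia.
    by move=> ->; rewrite subrr.
  have d0 : forall i, d i = 0%R.
    case: (pickP [pred i | d i != 0%R]) => [i0 /= hi0|h]; last first.
      by move=> i; move: (h i) => /= /negbFE /eqP.
    have [Hc h2 h3] := Lf_cond hL.
    have := dist10 pr p7 Hc h2 h3 (ex_intro _ i0 hi0).
    have : #|Pset d| <= size (iota 0 8 ++ [:: 3 * p - 1]).
      apply: card_le_seq => i; rewrite inE xpair_eqE negb_and mem_cat mem_iota inE.
      have hi := ltn_ord i.
      case/orP => h.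
        case: (leqP 8 i) => [/hS e|hi8]; first by rewrite e eqxx in h.
        by apply/orP; left; lia.
      case: (leqP 8 (ordS i)) => [/hS e|ho]; first by rewrite e eqxx in h.
      move: ho; rewrite /=; case: (ltnP i.+1 (3 * p)) => h1.
        by rewrite modn_small // => ho; apply/orP; left; lia.
      move=> _; have -> : (i : nat) = 3 * p - 1 by lia.
      by rewrite eqxx orbT.
    rewrite size_cat size_iota /=; lia.
  by apply/ffunP => i; apply/eqP; rewrite -subr_eq0; apply/eqP; apply: d0.
pose z8 := [ffun _ : 'I_8 => 0%R : 'F_p].
have img : psi @: setT = setT.
  apply/eqP; rewrite eqEcard subsetT /= card_imset // !cardsT card_prod.
  by rewrite !card_ffun !card_ord Fp_cast // -expnD subnKC.
have E : psi @: code p = setX [set z8] setT.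
  apply/setP => [[a b]]; rewrite !inE /=; apply/imsetP/idP.
  - move=> [c cC [-> _]]; rewrite andbT; apply/eqP/ffunP => j; rewrite !ffunE.
    by rewrite in_code in cC; apply/eqP; move/forallP: cC.
  - move=> /andP [/eqP ha _].
    have : (a, b) \in psi @: setT by rewrite img inE.
    case/imsetP => c _ e; exists c => //.
    rewrite in_code; apply/forallP => j; move: e => [e1 _].
    by have := congr1 (fun f : {ffun 'I_8 -> 'F_p} => f j) e1; rewrite ha !ffunE => <-.
rewrite -(card_imset _ psi_inj) E cardsX cards1 cardsT card_ffun !card_ord Fp_cast //.
by rewrite mul1n.
Qed.
End PartJ.


Lemma mem10a m x : x %% 3 = 0 -> x <= 12 -> x \in [:: 0; 2; 3; 5; 6; 8; 9; 11; 12; m].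
Proof.
by case: x => [|[|[|[|[|[|[|[|[|[|[|[|[|x]]]]]]]]]]]]] //= _ _; rewrite !inE.
Qed.

Lemma mem10b m x : x.+1 %% 3 = 0 -> x.+1 <= 12 -> x \in [:: 0; 2; 3; 5; 6; 8; 9; 11; 12; m].
Proof.
by case: x => [|[|[|[|[|[|[|[|[|[|[|[|x]]]]]]]]]]]] //= _ _; rewrite !inE.
Qed.

Theorem theorem1 (p : nat) :
  prime p -> odd p -> 3 %| p.-1 ->
  exists C : {set {ffun 'I_(3 * p) -> 'F_p}},
    min_pair_dist_eq C 10 /\ #|C| = p ^ (3 * p - 10 + 2).
Proof.
move=> pr podd h3.
have p7 : 7 <= p.
  have p1 := prime_gt1 pr; case/dvdnP: h3 => k hk.
  case: k hk => [|[|k]] hk; [lia| |lia].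
  have e : p = 4 by lia.
  by rewrite e in podd.
exists (code p); split; last first.
  by rewrite card_code //; congr (_ ^ _); lia.
split; last by move=> x y hx hy hxy; apply: dist_ge.
pose y0 := [ffun _ : 'I_(3 * p) => 0%R : 'F_p].
have h13 : 13 <= 3 * p by lia.
have hy0 : y0 \in code p.
  rewrite in_code; apply/forallP => j; apply/eqP.
  rewrite (@Lf_ext p y0 (fun i => c0 p i - c0 p i)%R) ?Lf_sub ?subrr // => i.
  by rewrite ffunE subrr.
have hne : c0 p != y0.
  have h0 : 0 < 3 * p by lia.
  apply/eqP => e; have := congr1 (fun f : {ffun 'I_(3 * p) -> 'F_p} => f (Ordinal h0)) e.
  by rewrite /c0 /y0 !ffunE /f0 /= => /eqP; rewrite oner_eq0.
exists (c0 p), y0; split => //; first exact: c0_code.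
apply/eqP; rewrite eqn_leq (dist_ge pr p7 (c0_code h13) hy0 hne) andbT.
  rewrite pd_eq.
  have -> : 10 = size [:: 0; 2; 3; 5; 6; 8; 9; 11; 12; 3 * p - 1] by [].
  apply: card_le_seq => i; rewrite inE xpair_eqE negb_and /y0 /c0 !ffunE !subr0.
  have hi := ltn_ord i.
  case/orP => /f0_supp /andP [/eqP m3 l12].
    exact: mem10a.
  move: m3 l12; rewrite /=; case: (ltnP i.+1 (3 * p)) => h1.
    by rewrite (modn_small h1); apply: mem10b.
  have -> : (i : nat) = 3 * p - 1 by clear -hi h1; lia.
  by rewrite !inE eqxx !orbT.
Qed.
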